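(* Let $\mathbf{P_0},\mathbf{P_1}$ be $n\times n$ transition probability matrices of irreducible and aperiodic Markov chains on $n$ states, let $\mathbf{P_s}=(1-s)\mathbf{P_0}+s\mathbf{P_1}$ for $s\in[0,1]$, and let $\pi_s$ be the stationary distribution of $\mathbf{P_s}$. Then $s\mapsto\pi_s$ is continuous at $s=0$ with respect to the total variation norm. In particular, for $0<\epsilon<1/\sqrt{n}$, if $$\delta=\frac{\epsilon(1-\sqrt{n}\,\epsilon)}{4n^{3/2}\,t_{mix}(\epsilon/2)},$$ then $\|\pi_s-\pi_0\|_{TV}\le\epsilon/2$ for all $s\in[0,1]$ with $s\le\delta$.
   Context: Distributions are row vectors; $\|\mu-\nu\|_{TV}=\frac12\|\mu-\nu\|_1$. For an irreducible aperiodic transition matrix $\mathbf{P}$ with stationary distribution $\pi$, $t_{mix}(\mathbf{P},\epsilon)=\inf\{T\in\mathbb{N}: \|\nu\mathbf{P}^T-\pi\|_{TV}\le\epsilon \text{ for all distributions }\nu\}$, and $t_{mix}(\epsilon)=\sup_{s\in[0,1]}t_{mix}(\mathbf{P_s},\epsilon)$. *)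

(* Defs.v *)
From HB Require Import structures.
From mathcomp Require Import all_boot all_order all_algebra.
From mathcomp Require Import all_classical all_reals ereal.
Set Implicit Arguments. Unset Strict Implicit. Unset Printing Implicit Defensive.
Import Order.TTheory GRing.Theory Num.Theory.
Local Open Scope ring_scope.
Local Open Scope classical_set_scope.

Section MC.
Variable R : realType.
Variable n : nat.

Definition is_distr (mu : 'rV[R]_n) : Prop :=
  (forall i, 0 <= mu 0 i) /\ \sum_i mu 0 i = 1.

Definition stochastic (P : 'M[R]_n) : Prop :=
  (forall i j, 0 <= P i j) /\ (forall i, \sum_j P i j = 1).

Definition mpow (P : 'M[R]_n) (t : nat) : 'M[R]_n := iter t (fun M => M *m P) 1%:M.

Definition irreducible (P : 'M[R]_n) : Prop :=
  forall i j, exists t : nat, 0 < mpow P t i j.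

Definition aperiodic (P : 'M[R]_n) : Prop :=
  forall i (d : nat), (forall t : nat, (0 < t)%N -> 0 < mpow P t i i -> (d %| t)%N) -> d = 1%N.

Definition irred_aperiodic_chain (P : 'M[R]_n) : Prop :=
  stochastic P /\ irreducible P /\ aperiodic P.

Definition stationary (P : 'M[R]_n) (pi : 'rV[R]_n) : Prop :=
  is_distr pi /\ pi *m P = pi.

Definition tv (mu nu : 'rV[R]_n) : R := 2^-1 * \sum_i `|mu 0 i - nu 0 i|.

Definition mixed_by (P : 'M[R]_n) (eps : R) (T : nat) : Prop :=
  forall pi, stationary P pi ->
  forall nu, is_distr nu -> tv (nu *m mpow P T) pi <= eps.

(* t_mix(P, eps) = inf {T in N | ...}  (+oo if the set is empty) *)
Definition tmix (P : 'M[R]_n) (eps : R) : \bar R :=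
  ereal_inf [set (T%:R)%:E | T in mixed_by P eps].

Definition Pmix (P0 P1 : 'M[R]_n) (s : R) : 'M[R]_n := (1 - s) *: P0 + s *: P1.

(* t_mix(eps) = sup_{s in [0,1]} t_mix(P_s, eps) *)
Definition tmix_sup (P0 P1 : 'M[R]_n) (eps : R) : \bar R :=
  ereal_sup [set tmix (Pmix P0 P1 s) eps | s in [set s : R | 0 <= s <= 1]].

(* delta = eps (1 - sqrt n eps) / (4 n^{3/2} t_mix(eps/2)), as an extended real:
   +oo if t_mix(eps/2) = 0, 0 if t_mix(eps/2) = +oo *)
Definition delta (P0 P1 : 'M[R]_n) (eps : R) : \bar R :=
  match tmix_sup P0 P1 (eps / 2) with
  | EFin t => if t == 0 then +oo%E
              else (eps * (1 - Num.sqrt n%:R * eps) /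
                     (4 * (n%:R * Num.sqrt n%:R) * t))%:E
  | +oo%E => 0%:E
  | -oo%E => +oo%E
  end.

End MC.

(* Main.v *)
Require Import Defs.
From HB Require Import structures.
From mathcomp Require Import all_boot all_order all_algebra.
From mathcomp Require Import all_classical all_reals ereal.
From mathcomp Require Import ring lra.
Import Order.TTheory GRing.Theory Num.Theory.
Local Open Scope ring_scope.

Section Helpers.
Variable R : realType.
Variable n : nat.
Local Notation vec := 'rV[R]_n.

Definition l1 (v : vec) : R := \sum_i `|v 0 i|.

Lemma l1_ge0 v : 0 <= l1 v.
Proof. by apply: sumr_ge0 => i _. Qed.

Lemma l1D u v : l1 (u + v) <= l1 u + l1 v.
Proof.
rewrite /l1 -big_split /=; apply: ler_sum => i _; rewrite mxE; exact: ler_normD.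
Qed.

Lemma l10 : l1 0 = 0.
Proof. by rewrite /l1 big1 // => i _; rewrite mxE normr0. Qed.

Lemma tvE (mu nu : vec) : tv mu nu = 2^-1 * l1 (mu - nu).
Proof. by rewrite /tv /l1; congr (_ * _); apply: eq_bigr => i _; rewrite !mxE. Qed.

Lemma l1_mul (N : 'M[R]_n) (v : vec) K :
  (forall i, \sum_j `|N i j| <= K) -> l1 (v *m N) <= K * l1 v.
Proof.
move=> hK; rewrite /l1.
apply: le_trans (_ : \sum_j \sum_i `|v 0 i| * `|N i j| <= _).
  apply: ler_sum => j _; rewrite mxE; apply: le_trans (ler_norm_sum _ _ _) _.
  by apply: ler_sum => i _; rewrite normrM.
rewrite exchange_big /= mulr_sumr; apply: ler_sum => i _.
by rewrite -mulr_sumr mulrC ler_wpM2r.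
Qed.

Lemma l1_stoch (P : 'M[R]_n) v : stochastic P -> l1 (v *m P) <= l1 v.
Proof.
case=> hP0 hP1; rewrite -[X in _ <= X]mul1r; apply: l1_mul => i.
by rewrite -(hP1 i) le_eqVlt; apply/orP; left; apply/eqP/eq_bigr => j _; rewrite ger0_norm.
Qed.

Lemma distr_stoch (P : 'M[R]_n) v : stochastic P -> is_distr v -> is_distr (v *m P).
Proof.
case=> hP0 hP1 [hv0 hv1]; split.
  by move=> j; rewrite mxE; apply: sumr_ge0 => i _; apply: mulr_ge0.
under eq_bigr do rewrite mxE.
rewrite exchange_big /= -hv1; apply: eq_bigr => i _.
by rewrite -mulr_sumr hP1 mulr1.
Qed.

Lemma mpowS (P : 'M[R]_n) t : mpow P t.+1 = mpow P t *m P.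
Proof. by []. Qed.

Lemma mpow0 (P : 'M[R]_n) : mpow P 0 = 1%:M.
Proof. by []. Qed.

Lemma distr_mpow (P : 'M[R]_n) v t :
  stochastic P -> is_distr v -> is_distr (v *m mpow P t).
Proof.
move=> hP hv; elim: t => [|t IH]; first by rewrite mpow0 mulmx1.
by rewrite mpowS mulmxA; apply: distr_stoch.
Qed.

Lemma stat_mpow (P : 'M[R]_n) (pi : vec) t : pi *m P = pi -> pi *m mpow P t = pi.
Proof.
move=> h; elim: t => [|t IH]; first by rewrite mpow0 mulmx1.
by rewrite mpowS mulmxA IH h.
Qed.

Lemma mpow_ge0 (P : 'M[R]_n) t i j : stochastic P -> 0 <= mpow P t i j.
Proof.
case=> hP0 _; elim: t i j => [|t IH] i j.
  by rewrite mpow0 mxE ler0n.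
rewrite mpowS mxE; apply: sumr_ge0 => k _; apply: mulr_ge0; [exact: IH|exact: hP0].
Qed.

Lemma stoch_Pmix (P0 P1 : 'M[R]_n) s :
  stochastic P0 -> stochastic P1 -> 0 <= s <= 1 -> stochastic (Pmix P0 P1 s).
Proof.
case=> a0 a1 [b0 b1] /andP[s0 s1]; split.
  move=> i j; rewrite /Pmix !mxE; apply: addr_ge0; apply: mulr_ge0 => //.
  by rewrite subr_ge0.
move=> i; under eq_bigr do rewrite /Pmix !mxE.
by rewrite big_split /= -!mulr_sumr a1 b1 !mulr1 subrK.
Qed.

Lemma Pmix0 (P0 P1 : 'M[R]_n) : Pmix P0 P1 0 = P0.
Proof. by rewrite /Pmix subr0 scale1r scale0r addr0. Qed.

Lemma Pmix_rows (P0 P1 : 'M[R]_n) s :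
  stochastic P0 -> stochastic P1 -> 0 <= s ->
  forall i, \sum_j `|P0 i j - Pmix P0 P1 s i j| <= 2 * s.
Proof.
case=> a0 a1 [b0 b1] s0 i.
apply: le_trans (_ : \sum_j s * (P0 i j + P1 i j) <= _).
  apply: ler_sum => j _; rewrite /Pmix !mxE.
  have -> : P0 i j - ((1 - s) * P0 i j + s * P1 i j) = s * (P0 i j - P1 i j) by ring.
  rewrite normrM ger0_norm // ler_wpM2l //.
  apply: le_trans (ler_normB _ _) _.
  by rewrite !ger0_norm.
by rewrite -mulr_sumr big_split /= a1 b1 mulrC.
Qed.

Lemma l1_diffmul (A B : 'M[R]_n) y c :
  is_distr y -> (forall i, \sum_j `|A i j - B i j| <= c) ->
  l1 (y *m (A - B)) <= c.
Proof.
case=> y0 y1 hc; rewrite /l1.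
apply: le_trans (_ : \sum_j \sum_i y 0 i * `|A i j - B i j| <= _).
  apply: ler_sum => j _; rewrite mxE; apply: le_trans (ler_norm_sum _ _ _) _.
  by apply: ler_sum => i _; rewrite normrM ger0_norm // !mxE.
rewrite exchange_big /= -[X in _ <= X]mul1r -y1 mulr_suml.
by apply: ler_sum => i _; rewrite -mulr_sumr ler_wpM2l.
Qed.

Lemma l1_perturb (A B : 'M[R]_n) v c t :
  stochastic A -> stochastic B -> is_distr v ->
  (forall i, \sum_j `|A i j - B i j| <= c) ->
  l1 (v *m mpow A t - v *m mpow B t) <= t%:R * c.
Proof.
move=> hA hB hv hc; elim: t => [|t IH].
  by rewrite subrr l10 mul0r.
have -> : v *m mpow A t.+1 - v *m mpow B t.+1 =
   (v *m mpow A t - v *m mpow B t) *m A + (v *m mpow B t) *m (A - B).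
  by rewrite !mpowS !mulmxA mulmxBl mulmxBr addrA subrK.
apply: le_trans (l1D _ _) _.
rewrite mulrSr mulrDl mul1r; apply: lerD.
  exact: le_trans (@l1_stoch A _ hA) IH.
apply: l1_diffmul => //; exact: distr_mpow.
Qed.

Lemma distr_e (x : 'I_n) : is_distr (delta_mx 0 x : vec).
Proof.
split; first by move=> j; rewrite mxE ler0n.
rewrite (bigD1 x) //= big1 ?addr0; first by rewrite mxE !eqxx.
by move=> j /negbTE hj; rewrite mxE hj andbF.
Qed.

Lemma l1_contract (Q : 'M[R]_n) (mu pi : vec) c :
  \sum_i mu 0 i = 0 -> (forall x, \sum_j `|Q x j - pi 0 j| <= c) ->
  l1 (mu *m Q) <= c * l1 mu.
Proof.
move=> hmu hc.
have -> : mu *m Q = mu *m (Q - \matrix_(i, j) pi 0 j).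
  rewrite mulmxBr; apply/matrixP => i j; rewrite !mxE.
  under [X in _ = _ - X]eq_bigr do rewrite mxE.
  by rewrite -mulr_suml (ord1 i) hmu mul0r subr0.
by apply: l1_mul => i; under eq_bigr do rewrite !mxE.
Qed.

Lemma key (A B : 'M[R]_n) (pA pB : vec) eps T s :
  stochastic A -> stochastic B -> stationary A pA -> stationary B pB ->
  mixed_by B (eps / 2) T ->
  (forall i, \sum_j `|A i j - B i j| <= 2 * s) ->
  l1 (pA - pB) <= T%:R * (2 * s) + eps * l1 (pA - pB).
Proof.
move=> hA hB [hpA eA] [hpB eB] hmix hc.
have E : pA - pB = (pA *m mpow A T - pA *m mpow B T) + (pA - pB) *m mpow B T.
  by rewrite mulmxBl (@stat_mpow A pA T eA) (@stat_mpow B pB T eB) addrA subrK.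
rewrite {1}E; apply: le_trans (l1D _ _) _; apply: lerD.
  exact: l1_perturb.
apply: (@l1_contract _ _ pB).
  under eq_bigr do rewrite mxE.
  by under eq_bigr do rewrite !mxE; rewrite sumrB hpA.2 hpB.2 subrr.
move=> x; have := hmix pB (conj hpB eB) _ (distr_e x).
rewrite /tv -rowE; under eq_bigr do rewrite mxE.
move=> h; lra.
Qed.


Lemma inv_pos (P : 'M[R]_n) (mu : vec) j :
  stochastic P -> irreducible P -> mu *m P = mu -> \sum_i mu 0 i = 0 ->
  0 < mu 0 j -> False.
Proof.
move=> hP hirr eP hmu hj; have [P0 P1] := hP.
pose a : vec := \row_i `|mu 0 i|.
have h1 : forall k, a 0 k <= (a *m P) 0 k.
  move=> k; rewrite mxE.
  have -> : mu 0 k = (mu *m P) 0 k by rewrite eP.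
  rewrite !mxE; apply: le_trans (ler_norm_sum _ _ _) _; apply: ler_sum => i _.
  by rewrite mxE normrM (ger0_norm (P0 _ _)).
have h2 : \sum_k (a *m P) 0 k = \sum_k a 0 k.
  under eq_bigr do rewrite mxE.
  rewrite exchange_big /=; apply: eq_bigr => i _.
  by rewrite -mulr_sumr P1 mulr1.
have h3 : a *m P = a.
  apply/matrixP => i k; rewrite (ord1 i); apply/eqP; rewrite -subr_eq0; apply/eqP.
  apply: (@psumr_eq0P _ _ predT (fun k => (a *m P) 0 k - a 0 k)) => //.
    by move=> k' _; rewrite subr_ge0; exact: h1.
  by rewrite sumrB h2 subrr.
pose b := a + mu.
have hb : b *m P = b by rewrite mulmxDl h3 eP.
have bE : forall k, b 0 k = `|mu 0 k| + mu 0 k by move=> k; rewrite !mxE.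
have b0 : forall k, 0 <= b 0 k.
  by move=> k; rewrite bE; case: (lerP 0 (mu 0 k)) => h;
    [rewrite ger0_norm|rewrite ltr0_norm]; lra.
have bpos : forall k, 0 < b 0 k.
  move=> k; have [t ht] := hirr j k.
  rewrite -(@stat_mpow P b t hb) mxE.
  apply: (@lt_le_trans _ _ (b 0 j * mpow P t j k)).
    by apply: mulr_gt0 => //; rewrite bE ger0_norm; lra.
  rewrite (bigD1 j) //= lerDl; apply: sumr_ge0 => i _.
  by apply: mulr_ge0; [exact: b0|exact: mpow_ge0].
have mpos : forall k, 0 < mu 0 k.
  move=> k; have := bpos k; rewrite bE.
  by case: (lerP 0 (mu 0 k)) => h; [rewrite ger0_norm|rewrite ltr0_norm]; lra.
move: hmu; rewrite (bigD1 j) //=.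
have : 0 <= \sum_(i | i != j) mu 0 i by apply: sumr_ge0 => i _; apply: ltW.
lra.
Qed.

Lemma uniq_kernel (P : 'M[R]_n) (mu : vec) :
  stochastic P -> irreducible P -> mu *m P = mu -> \sum_i mu 0 i = 0 ->
  mu = 0.
Proof.
move=> hP hirr eP hmu; apply/matrixP => i k; rewrite (ord1 i) [RHS]mxE.
case: (ltrgtP (mu 0 k) 0) => // h; exfalso.
  apply: (@inv_pos P (- mu) k hP hirr).
  - by rewrite mulNmx eP.
  - by under eq_bigr do rewrite mxE; rewrite sumrN hmu oppr0.
  - by rewrite mxE oppr_gt0.
exact: (@inv_pos P mu k hP hirr).
Qed.

Lemma right_inv (P : 'M[R]_n) : stochastic P -> irreducible P ->
  exists N : 'M[R]_(n + 1, n),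
    row_mx (P - 1%:M) (const_mx 1 : 'M[R]_(n, 1)) *m N = 1%:M.
Proof.
move=> hP hirr; apply/row_freeP; rewrite -kermx_eq0.
apply/eqP/row_matrixP => i; rewrite row0.
set u := row i _.
have : u *m row_mx (P - 1%:M) (const_mx 1 : 'M[R]_(n, 1)) = 0.
  by apply/sub_kermxP; exact: row_sub.
rewrite mul_mx_row => /eqP; rewrite row_mx_eq0 => /andP[/eqP h1 /eqP h2].
apply: uniq_kernel hP hirr _ _.
  by move: h1; rewrite mulmxBr mulmx1 => /eqP; rewrite subr_eq0 => /eqP.
move/(congr1 (fun M : 'M[R]_(1,1) => M 0 0)): h2; rewrite !mxE.
move=> h; apply: etrans h; apply: eq_bigr => k _; by rewrite [const_mx _ _ _]mxE mulr1.
Qed.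


Lemma part1 (P0 P1 : 'M[R]_n) (pi : R -> vec) :
  stochastic P0 -> irreducible P0 -> stochastic P1 ->
  (forall s : R, 0 <= s <= 1 -> stationary (Pmix P0 P1 s) (pi s)) ->
  forall e : R, 0 < e -> exists2 d : R, 0 < d &
     forall s : R, 0 <= s <= 1 -> s < d -> tv (pi s) (pi 0) < e.
Proof.
move=> h0 hirr h1 hpi e he.
have [N hN] := @right_inv P0 h0 hirr.
pose N1 := usubmx N; pose N2 := dsubmx N.
have hN' : row_mx (P0 - 1%:M) (const_mx 1 : 'M[R]_(n, 1)) *m col_mx N1 N2 = 1%:M.
  by rewrite /N1 /N2 vsubmxK.
pose K := \sum_i \sum_j `|N1 i j|.
have K0 : 0 <= K by apply: sumr_ge0 => i _; apply: sumr_ge0.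
exists (e / (K + 1)); first by apply: divr_gt0 => //; lra.
move=> s hs hsd.
have [[hps ps1] eps] := hpi s hs.
have [[hp0 p01] ep0] : stationary P0 (pi 0).
  by rewrite -(Pmix0 P0 P1); apply: hpi; rewrite lexx ler01.
set mu := pi s - pi 0.
have hmu : mu = (pi s *m (P0 - Pmix P0 P1 s)) *m N1.
  have -> : mu = mu *m row_mx (P0 - 1%:M) (const_mx 1 : 'M[R]_(n, 1)) *m col_mx N1 N2.
    by rewrite -mulmxA hN' mulmx1.
  rewrite mul_mx_row mul_row_col.
  have -> : mu *m (const_mx 1 : 'M[R]_(n, 1)) = 0.
    apply/matrixP => i j; rewrite (ord1 i) (ord1 j) [RHS]mxE mxE.
    under eq_bigr do rewrite [const_mx _ _ _]mxE mulr1 !mxE.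
    by rewrite sumrB ps1 p01 subrr.
  rewrite mul0mx addr0; congr (_ *m _).
  by rewrite /mu !mulmxBr !mulmxBl !mulmx1 ep0 eps opprB addrA subrK.
have hl1 : l1 mu <= K * l1 (pi s *m (P0 - Pmix P0 P1 s)).
  rewrite hmu; apply: l1_mul => i.
  by rewrite /K [X in _ <= X](bigD1 i) //= lerDl; apply: sumr_ge0 => k _; apply: sumr_ge0.
have hx : l1 (pi s *m (P0 - Pmix P0 P1 s)) <= 2 * s.
  by apply: l1_diffmul => //; apply: Pmix_rows => //; case/andP: hs.
have hK : K * l1 (pi s *m (P0 - Pmix P0 P1 s)) <= K * (2 * s) by rewrite ler_wpM2l.
move: hsd; rewrite ltr_pdivlMr; last by lra.
rewrite tvE -/mu => hsd.
have : 0 <= K * s by apply: mulr_ge0 => //; case/andP: hs.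
case/andP: hs => s0 s1.
nra.
Qed.

Lemma part2 (P0 P1 : 'M[R]_n) (pi : R -> vec) :
  stochastic P0 -> stochastic P1 -> (0 < n)%N ->
  (forall s : R, 0 <= s <= 1 -> stationary (Pmix P0 P1 s) (pi s)) ->
  forall eps : R, 0 < eps -> eps < (Num.sqrt n%:R)^-1 ->
     forall s : R, 0 <= s <= 1 -> (s%:E <= delta P0 P1 eps)%E ->
       tv (pi s) (pi 0) <= eps / 2.
Proof.
move=> h0 h1 hn hpi eps he heq s hs.
set q := Num.sqrt (n%:R : R).
have q1 : 1 <= q by rewrite /q -[X in X <= _]sqrtr1 ler_sqrt // ler1n.
have n1 : 1 <= n%:R :> R by rewrite ler1n.
have q0 : 0 < q by lra.
have qe : q * eps < 1.
  have : q * eps < q * q^-1 by rewrite ltr_pM2l.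
  by rewrite mulfV ?gt_eqF.
have hst0 : stationary P0 (pi 0).
  by rewrite -(Pmix0 P0 P1); apply: hpi; rewrite lexx ler01.
have tmix0 : (tmix P0 (eps / 2) <= tmix_sup P0 P1 (eps / 2))%E.
  apply: ereal_sup_ubound; exists 0; first by rewrite /= lexx ler01.
  by rewrite Pmix0.
have tmix_ge0 : (0%:E <= tmix P0 (eps / 2))%E.
  by apply: le_ereal_inf_tmp => y [T _ <-]; rewrite lee_fin ler0n.
rewrite /delta; case E: (tmix_sup P0 P1 (eps / 2)) => [t| |] hd.
- have [T0 hT0] : exists T, mixed_by P0 (eps / 2) T.
    case: (pselect (exists T, mixed_by P0 (eps / 2) T)) => // hno; exfalso.
    have : tmix P0 (eps / 2) = +oo%E.
      rewrite /tmix (_ : [set _ | T in _]%classic = set0%classic) ?ereal_inf0 //.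
      by apply/seteqP; split => x // [T hT _]; apply: hno; exists T.
    by move: tmix0; rewrite E => h2 h3; rewrite h3 in h2.
  pose P := fun T => `[< mixed_by P0 (eps / 2) T >].
  have exP : exists T, P T by exists T0; apply/asboolP.
  case: (ex_minnP exP) => m /asboolP hm hmin.
  have mt : m%:R <= t.
    have : (m%:R%:E <= tmix P0 (eps / 2))%E.
      apply: le_ereal_inf_tmp => y [T hT <-]; rewrite lee_fin ler_nat.
      by apply: hmin; apply/asboolP.
    by move: tmix0; rewrite E => h2 h3; have := le_trans h3 h2; rewrite lee_fin.
  have hds : is_distr (pi s) by case: (hpi s hs).
  case: m hm hmin mt => [|m] hm _ mt.
    by have := hm (pi 0) hst0 (pi s) hds; rewrite mpow0 mulmx1.
  have t1 : 1 <= t by apply: le_trans mt; rewrite ler1n.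
  move: hd; rewrite (gt_eqF (lt_le_trans ltr01 t1)) lee_fin => hd.
  have hPs : stochastic (Pmix P0 P1 s) by apply: stoch_Pmix.
  have rows : forall i, \sum_j `|Pmix P0 P1 s i j - P0 i j| <= 2 * s.
    move=> i; under eq_bigr do rewrite distrC.
    by apply: Pmix_rows => //; case/andP: hs.
  have k := @key _ _ _ _ eps m.+1 s hPs h0 (hpi s hs) hst0 hm rows.
  rewrite tvE.
  have nq : 1 <= n%:R * q by nra.
  move: hd; rewrite -/q ler_pdivlMr; last by apply: mulr_gt0; lra.
  move=> hd; rewrite -/q in hd.
  case/andP: hs => s0 s1.
  have st0 : 0 <= s * t by nra.
  have a1 : 0 <= (n%:R * q - 1) * (s * t) by apply: mulr_ge0 => //; lra.
  have a2 : 0 <= (q - 1) * (eps * eps) by apply: mulr_ge0; nra.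
  have a3 : 0 <= (t - m.+1%:R) * s by apply: mulr_ge0; lra.
  have L0 := l1_ge0 (pi s - pi 0).
  nra.
- have -> : s = 0 by move: hd; rewrite lee_fin; case/andP: hs => ? ?; lra.
  by rewrite tvE subrr l10 mulr0; lra.
- by move: tmix0 tmix_ge0; rewrite E => h2 h3; have := le_trans h3 h2.
Qed.

End Helpers.

Theorem corollary1 (R : realType) (n : nat) (P0 P1 : 'M[R]_n)
  (pi : R -> 'rV[R]_n)
  (hP0 : irred_aperiodic_chain P0) (hP1 : irred_aperiodic_chain P1)
  (hpi : forall s : R, 0 <= s <= 1 -> stationary (Pmix P0 P1 s) (pi s)) :
  (forall e : R, 0 < e -> exists2 d : R, 0 < d &
     forall s : R, 0 <= s <= 1 -> s < d -> tv (pi s) (pi 0) < e)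
  /\
  (forall eps : R, 0 < eps -> eps < (Num.sqrt n%:R)^-1 ->
     forall s : R, 0 <= s <= 1 -> (s%:E <= delta P0 P1 eps)%E ->
       tv (pi s) (pi 0) <= eps / 2).
Proof.
case: hP0 => h0 [hirr0 _]; case: hP1 => h1 _.
have hn : (0 < n)%N.
  case: (posnP n) => // hn0; exfalso.
  have [[_ hs] _] := hpi 0 (ltac:(by rewrite lexx ler01)).
  move: hs; rewrite big1 => [/esym/eqP|[i hi] _]; first by rewrite oner_eq0.
  by exfalso; move: hi; rewrite hn0.
split; [exact: (@part1 R n P0 P1 pi h0 hirr0 h1 hpi) | exact: (@part2 R n P0 P1 pi h0 h1 hn hpi)].
Qed.
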